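(* Let $v\in\mathbb N_0^N$, $\mathbb T\in\mathrm{Tab}_\lambda$ and $1\le j\le N$. Then there are elements $H_u$ ($u\in\mathbb N_0^N$, $u\trianglelefteq v$) of the Hecke algebra such that $$x^v\,\mathbb T\,\Xi_j=x^v\otimes(\mathbb TH_v)+\sum_{v'\lhd v}x^{v'}\otimes(\mathbb TH_{v'}).$$
   Context: $N\ge2$, $q,s$ indeterminates, $K=\mathbb C(q,s)$. Operators act on the right, composed left to right. $\mathcal H_N(s)$ is generated by $T_1,\dots,T_{N-1}$ with $(T_i+1)(T_i-s)=0$ and braid relations. $\lambda$ is a partition of $N$ (French convention, rows numbered bottom to top); $\mathrm{Tab}_\lambda$ = reverse standard tableaux (bijective fillings by $1,\dots,N$ strictly decreasing left to right in rows and bottom to top in columns); $\mathrm{CT}_{\mathbb T}[i]$ = column minus row of the cell of $i$; $\mathbb T^{(i,j)}$ exchanges $i,j$. $V_\lambda$ has basis $\mathrm{Tab}_\lambda$ with right action $\mathbb TT_i=s\mathbb T$ if $i,i+1$ share a row, $-\mathbb T$ if they share a column, and if $i$ is in a higher row than $i+1$, with $m=\mathrm{CT}_{\mathbb T}[i+1]-\mathrm{CT}_{\mathbb T}[i]>0$, $\mathbb TT_i=\frac{s-1}{1-s^m}\mathbb T+\frac{s(1-s^{m+1})(1-s^{m-1})}{(1-s^m)^2}\mathbb T^{(i,i+1)}$; the remaining case is determined by this formula for $\mathbb T^{(i,i+1)}$ and the quadratic relation. $\mathcal M_\lambda=K[x_1,\dots,x_N]\otimes V_\lambda$, $x^v=x_1^{v_1}\cdots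 x_N^{v_N}$. With $p^{s_i}$ = $p$ with $x_i,x_{i+1}$ exchanged: $(p\otimes u)\mathbf T_i=(1-s)\frac{x_{i+1}(p-p^{s_i})}{x_i-x_{i+1}}\otimes u+p^{s_i}\otimes uT_i$, $(p\otimes u)\mathbf w=p(qx_N,x_1,\dots,x_{N-1})\otimes uT_1\cdots T_{N-1}$, $\mathbf T_i^{-1}=s^{-1}(\mathbf T_i+1-s)$, $\Xi_j=s^{j-N}\mathbf T_{j-1}^{-1}\cdots\mathbf T_1^{-1}\mathbf w\mathbf T_{N-1}\cdots\mathbf T_j$. Orders: $v^+$ is the decreasing rearrangement of $v$; $v\preceq v'$ iff $\sum_{k\le i}v_k\le\sum_{k\le i}v'_k$ for all $i$; $v\trianglelefteq v'$ iff either $v^+\ne v'^+$ and $v^+\preceq v'^+$, or $v^+=v'^+$ and $v\preceq v'$; $v'\lhd v$ means $v'\trianglelefteq v$ and $v'\neq v$. *)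

(* Defs.v *)
From HB Require Import structures.
From mathcomp Require Import all_boot all_order all_fingroup all_algebra.
From mathcomp Require Import Rstruct complex.
From mathcomp Require Import mpoly.
From Stdlib Require Import ClassicalEpsilon.
Set Implicit Arguments.
Unset Strict Implicit.
Unset Printing Implicit Defensive.
Import Order.TTheory GRing.Theory.
Local Open Scope ring_scope.

(* The field K = C(q,s).                                               *)
(* C[q][s]; q is the inner indeterminate, s the outer one.             *)
Definition CC : fieldType := complex Rdefinitions.R.
Definition KK : fieldType := {fraction {poly {poly CC}}}.
Definition qK : KK := @FracField.tofrac {poly {poly CC}} (('X : {poly CC})%:P).
Definition sK : KK := @FracField.tofrac {poly {poly CC}} 'X.

(* Partitions and reverse standard tableaux (French convention).       *)
(* Conventions: the entry number k+1 (1 <= k+1 <= N) is encoded by      *)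
(* e = k : 'I_N.  A tableau assigns to each entry its cell             *)
(* (row, column), rows numbered from 0 at the bottom, columns from 0   *)
(* at the left (content = column - row is unaffected by the shift).    *)
Definition is_partition (N : nat) (lam : seq nat) : bool :=
  [&& sorted geq lam, 0%N \notin lam & sumn lam == N].

Definition is_rst (N : nat) (lam : seq nat)
    (t : {ffun 'I_N -> 'I_N * 'I_N}) : bool :=
  [&& injectiveb t,
      [forall e, ((t e).2 < nth 0%N lam (t e).1)%N],
      [forall e, forall e',
         (((t e).1 == (t e').1) && ((t e).2 < (t e').2)%N) ==> (e' < e)%N] &
      [forall e, forall e',
         (((t e).2 == (t e').2) && ((t e).1 < (t e').1)%N) ==> (e' < e)%N]].

Notation Tab N lam := {t : {ffun 'I_N -> 'I_N * 'I_N} | @is_rst N lam t}.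

Definition rowt (N : nat) (lam : seq nat) (t : Tab N lam) (e : 'I_N) : nat :=
  ((val t) e).1.
Definition colt (N : nat) (lam : seq nat) (t : Tab N lam) (e : 'I_N) : nat :=
  ((val t) e).2.
Definition CT (N : nat) (lam : seq nat) (t : Tab N lam) (e : 'I_N) : int :=
  (colt t e)%:Z - (rowt t e)%:Z.
Definition swapT (N : nat) (lam : seq nat) (t : Tab N lam) (a b : 'I_N)
  : Tab N lam := insubd t [ffun e => (val t) (tperm a b e)].

(* V_lambda, with basis Tab_lambda: coordinate vectors *)
Notation Vec K N lam := {ffun Tab N lam -> K^o}.
Definition tbasis (K : fieldType) (N : nat) (lam : seq nat) (t : Tab N lam)
  : Vec K N lam := [ffun t' => (t' == t)%:R].

(* Generators T_i, 1 <= i <= N-1, are indexed by g : 'I_N.-1 with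
   i = g+1; they involve the entries/variables lo g (= i) and
   hi g (= i+1). *)
Definition lo (N : nat) (g : 'I_N.-1) : 'I_N := widen_ord (leq_pred N) g.
Definition hi (N : nat) (g : 'I_N.-1) : 'I_N := insubd (lo g) g.+1.

Section Rep.
Variables (K : fieldType) (q s : K).

Definition tabT (N : nat) (lam : seq nat) (g : 'I_N.-1) (t : Tab N lam)
  : Vec K N lam :=
  let a := lo g in let b := hi g in
  if rowt t a == rowt t b then s *: tbasis K t
  else if colt t a == colt t b then - tbasis K t
  else if (rowt t b < rowt t a)%N then
    let m := CT t b - CT t a in
    ((s - 1) / (1 - s ^ m)) *: tbasis K t
    + (s * (1 - s ^ (m + 1)) * (1 - s ^ (m - 1)) / (1 - s ^ m) ^+ 2)
        *: tbasis K (swapT t a b)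
  else
    (* remaining case, derived from the previous formula applied to
       T^{(i,i+1)} and the quadratic relation (T_i+1)(T_i-s)=0 *)
    let m := CT t a - CT t b in
    (s - 1 - (s - 1) / (1 - s ^ m)) *: tbasis K t + tbasis K (swapT t a b).

Definition actT (N : nat) (lam : seq nat) (g : 'I_N.-1) (u : Vec K N lam)
  : Vec K N lam := \sum_(t : Tab N lam) u t *: tabT g t.

(* Elements of H_N(s): finite linear combinations of words in the
   generators; a pair (c, [:: g1; ...; gk]) stands for c T_{g1} ... T_{gk}. *)
Definition hecke (N : nat) := seq (K * seq 'I_N.-1).
Definition actH (N : nat) (lam : seq nat) (h : hecke N) (u : Vec K N lam)
  : Vec K N lam :=
  \sum_(p <- h) p.1 *: foldl (fun u g => actT g u) u p.2.

(* M_lambda = K[x_1..x_N] (x) V_lambda, as V_lambda-coordinate vectors of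
   polynomials *)
Notation Mod K N lam := {ffun Tab N lam -> {mpoly K[N]}}.
Definition tens (N : nat) (lam : seq nat) (p : {mpoly K[N]}) (u : Vec K N lam)
  : Mod K N lam := [ffun t => u t *: p].

Definition swp (N : nat) (g : 'I_N.-1) (p : {mpoly K[N]}) : {mpoly K[N]} :=
  p \mPo [tuple 'X_(tperm (lo g) (hi g) i) | i < N].
(* x_{i+1} (p - p^{s_i}) / (x_i - x_{i+1})  (an exact division) *)
Definition ddiff (N : nat) (g : 'I_N.-1) (p : {mpoly K[N]}) : {mpoly K[N]} :=
  epsilon (inhabits 0) (fun r : {mpoly K[N]} =>
    r * ('X_(lo g) - 'X_(hi g)) = 'X_(hi g) * (p - swp g p)).

Definition opT (N : nat) (lam : seq nat) (g : 'I_N.-1) (F : Mod K N lam)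
  : Mod K N lam :=
  [ffun t' => (1 - s) *: ddiff g (F t')
             + \sum_(t : Tab N lam) tabT g t t' *: swp g (F t)].
Definition opTinv (N : nat) (lam : seq nat) (g : 'I_N.-1) (F : Mod K N lam)
  : Mod K N lam := s^-1 *: (opT g F + (1 - s) *: F).

(* p(q x_N, x_1, ..., x_{N-1}) *)
Definition shiftq (N : nat) (p : {mpoly K[N]}) : {mpoly K[N]} :=
  p \mPo [tuple (if (i : nat) == 0%N then q *: 'X_(rev_ord i)
                 else 'X_(insubd i i.-1)) | i < N].
Definition allT (N : nat) (lam : seq nat) (u : Vec K N lam) : Vec K N lam :=
  foldl (fun u g => actT g u) u (enum 'I_N.-1).
Definition opw (N : nat) (lam : seq nat) (F : Mod K N lam) : Mod K N lam :=
  [ffun t' => \sum_(t : Tab N lam) allT (tbasis K t) t' *: shiftq (F t)].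

(* Xi_j, j = jj+1 (jj : 'I_N):
   F Xi_j = s^{j-N} (((F T_{j-1}^{-1}) ... T_1^{-1}) w) T_{N-1} ... T_j *)
Definition opXi (N : nat) (lam : seq nat) (jj : 'I_N) (F : Mod K N lam)
  : Mod K N lam :=
  s ^- (N - jj.+1) *:
    foldl (fun F g => opT g F)
      (opw (foldl (fun F g => opTinv g F) F
              (rev [seq g : 'I_N.-1 <- enum 'I_N.-1 | (g < jj)%N])))
      (rev [seq g : 'I_N.-1 <- enum 'I_N.-1 | (jj <= g)%N]).
End Rep.


Definition mseq (N : nat) (m : 'X_{1..N}) : seq nat := [seq m i | i <- enum 'I_N].
Definition dom (N : nat) (a b : seq nat) : bool :=
  [forall i : 'I_N.+1, (sumn (take i a) <= sumn (take i b))%N].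
Definition decr (a : seq nat) : seq nat := sort geq a.
Definition tle (N : nat) (v' v : 'X_{1..N}) : bool :=
  let a := mseq v' in let b := mseq v in
  if decr a != decr b then dom N (decr a) (decr b) else dom N a b.
Definition tlt (N : nat) (v' v : 'X_{1..N}) : bool := tle v' v && (v' != v).

(* Main.v *)
Require Import Defs.
From HB Require Import structures.
From mathcomp Require Import all_boot all_order all_fingroup all_algebra.
From mathcomp Require Import mpoly.
From mathcomp Require Import zify ring.
From Stdlib Require Import ClassicalEpsilon.
Set Implicit Arguments.
Unset Strict Implicit.
Unset Printing Implicit Defensive.
Section Comb.
Variable N : nat.
Implicit Types m : 'X_{1..N}.

Definition mget m (x : nat) : nat := nth 0%N (mseq m) x.

Lemma size_mseq m : size (mseq m) = N.
Proof. by rewrite /mseq size_map size_enum_ord. Qed.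

Lemma mget_ord m (i : 'I_N) : mget m i = m i.
Proof. by rewrite /mget /mseq (nth_map i) ?size_enum_ord // nth_ord_enum. Qed.

Lemma mseqE m : mseq m = map (mget m) (iota 0 N).
Proof.
by rewrite /mseq -val_enum_ord -map_comp; apply: eq_map => i /=; rewrite mget_ord.
Qed.

Lemma mnm_eq m1 m2 : (forall x, x < N -> mget m1 x = mget m2 x) -> m1 = m2.
Proof. by move=> h; apply/mnmP => i; rewrite -!mget_ord h. Qed.

Definition rix (f : nat -> nat) m : 'X_{1..N} := [multinom mget m (f i) | i < N].

Lemma mget_rix f m x : x < N -> mget (rix f m) x = mget m (f x).
Proof. by move=> lt; rewrite -[x]/(nat_of_ord (Ordinal lt)) mget_ord mnmE. Qed.

Lemma rix_comp f g m : (forall x, x < N -> f x < N) ->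
  rix f (rix g m) = rix (fun x => g (f x)) m.
Proof. by move=> hf; apply: mnm_eq => x lt; rewrite !mget_rix ?hf. Qed.

Lemma rix_id f m : (forall x, x < N -> f x = x) -> rix f m = m.
Proof. by move=> hf; apply: mnm_eq => x lt; rewrite mget_rix ?hf. Qed.

Lemma mget_le_sumn m x : mget m x <= sumn (mseq m).
Proof.
rewrite /mget; elim: (mseq m) x => [|y s IH] [|x] //=; first by lia.
by have := IH x; lia.
Qed.

Lemma sumn_take_nth (s : seq nat) i : i <= size s ->
  sumn (take i s) = \sum_(0 <= k < i) nth 0%N s k.
Proof.
elim: i => [|i IH] hi; first by rewrite take0 big_geq.
by rewrite (take_nth 0%N) // sumn_rcons IH ?(ltnW hi) // big_nat_recr.
Qed.

Definition psum m i := \sum_(0 <= k < i) mget m k.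

Lemma dom_mseqP m1 m2 :
  reflect (forall i, i <= N -> psum m1 i <= psum m2 i) (Defs.dom N (mseq m1) (mseq m2)).
Proof.
apply: (iffP forallP) => h i.
  move=> hi; have := h (Ordinal (hi : i < N.+1)).
  by rewrite !sumn_take_nth ?size_mseq.
rewrite !sumn_take_nth ?size_mseq; [apply: h| |]; by rewrite -ltnS.
Qed.

Lemma dom_trans a b c : Defs.dom N a b -> Defs.dom N b c -> Defs.dom N a c.
Proof.
move=> /forallP h1 /forallP h2; apply/forallP => i; exact: leq_trans (h1 i) (h2 i).
Qed.

Lemma dom_refl a : Defs.dom N a a.
Proof. by apply/forallP. Qed.

Lemma dom_anti a b : size a = N -> size b = N -> Defs.dom N a b -> Defs.dom N b a -> a = b.
Proof.
move=> sa sb /forallP h1 /forallP h2.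
have e : forall i, i <= N -> \sum_(0 <= k < i) nth 0%N a k = \sum_(0 <= k < i) nth 0%N b k.
  move=> i hi; have := h1 (Ordinal (hi : i < N.+1)); have := h2 (Ordinal (hi : i < N.+1)).
  rewrite /= !sumn_take_nth ?sa ?sb //; lia.
apply: (eq_from_nth (x0 := 0%N)); first by rewrite sa sb.
move=> i; rewrite sa => hi.
have := e i.+1 hi; have := e i (ltnW hi); rewrite !big_nat_recr //=; lia.
Qed.

Lemma geq_total : total geq. Proof. by move=> x y; rewrite /= leq_total. Qed.
Lemma geq_trans : transitive geq. Proof. by move=> x y z /= h1 h2; exact: leq_trans h2 h1. Qed.
Lemma geq_anti : antisymmetric geq.
Proof. by move=> x y /andP[/= h1 h2]; apply/eqP; rewrite eqn_leq h1 h2. Qed.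

Lemma decr_perm a b : perm_eq a b -> decr a = decr b.
Proof. by move=> h; apply/perm_sortP => //; [exact: geq_total|exact: geq_trans|exact: geq_anti]. Qed.

Lemma decr_count a (P : pred nat) : count P (decr a) = count P a.
Proof. have h : perm_eq (decr a) a by rewrite /decr perm_sort. by move/seq.permP: h => ->. Qed.

Lemma size_decr a : size (decr a) = size a.
Proof. by rewrite size_sort. Qed.

Lemma tle_same (x y w : 'X_{1..N}) : decr (mseq x) = decr (mseq y) -> Defs.dom N (mseq x) (mseq y) ->
  tle y w -> tle x w.
Proof. by rewrite /tle => -> hd; case: ifP => // _; apply: dom_trans. Qed.

Lemma tle_lower (x y w : 'X_{1..N}) : decr (mseq x) != decr (mseq y) ->
  Defs.dom N (decr (mseq x)) (decr (mseq y)) -> tle y w -> tle x w.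
Proof.
rewrite /tle => hne hd.
case: ifP => [/negbTE hyw|/negbFE/eqP hyw] h.
  have -> : (decr (mseq x) != decr (mseq w)).
    apply/eqP => exw; move: hyw; rewrite -exw.
    rewrite (dom_anti _ _ hd) ?eqxx // ?size_decr ?size_mseq //.
    by move: h; rewrite -exw.
  exact: dom_trans hd h.
by rewrite -hyw hne.
Qed.

Lemma decr_rix f g m : (forall x, x < N -> f x < N) -> (forall x, x < N -> g x < N) ->
  (forall x, x < N -> g (f x) = x) -> (forall x, x < N -> f (g x) = x) ->
  decr (mseq (rix f m)) = decr (mseq m).
Proof.
move=> hf hg hgf hfg; apply: decr_perm; rewrite !mseqE.
have -> : map (mget (rix f m)) (iota 0 N) = map (mget m) (map f (iota 0 N)).
  rewrite -map_comp; apply/eq_in_map => x; rewrite mem_iota add0n /= => hx.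
  exact: mget_rix.
apply: perm_map; apply: uniq_perm; last 2 first.
- exact: iota_uniq.
- move=> x; apply/mapP/idP => [[y]|].
    by rewrite !mem_iota !add0n /= => hy ->; apply: hf.
  rewrite mem_iota add0n /= => hx; exists (g x); last by rewrite hfg.
  by rewrite mem_iota add0n hg.
rewrite map_inj_in_uniq ?iota_uniq // => x y; rewrite !mem_iota !add0n /= => hx hy e.
by rewrite -(hgf x hx) e hgf.
Qed.

Definition swpf (p r x : nat) : nat := if x == p then r else if x == r then p else x.

Lemma swpf_inv p r x : swpf p r (swpf p r x) = x.
Proof. rewrite /swpf; repeat case: eqP; lia. Qed.

Lemma swpf_lt p r x : p < N -> r < N -> x < N -> swpf p r x < N.
Proof. rewrite /swpf; repeat case: eqP; lia. Qed.

Lemma decr_swp p r m : p < N -> r < N -> decr (mseq (rix (swpf p r) m)) = decr (mseq m).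
Proof.
by move=> hp hr; apply: (decr_rix (g := swpf p r)) => x hx; rewrite ?swpf_lt ?swpf_inv.
Qed.

Lemma dom_swap p r m : p < r -> r < N -> mget m r <= mget m p ->
  Defs.dom N (mseq (rix (swpf p r) m)) (mseq m).
Proof.
move=> hpr hr hle; apply/dom_mseqP => i hi.
have claim : forall n, n <= N -> psum (rix (swpf p r) m) n + ((p < n) && (n <= r)) * mget m p
   = psum m n + ((p < n) && (n <= r)) * mget m r.
  elim=> [|n IH] hn; first by rewrite /psum !big_geq.
  rewrite /psum !big_nat_recr //= mget_rix // [swpf p r n]/swpf.
  have := IH (ltnW hn); rewrite /psum.
  case: eqP => [->|ne1]; last case: eqP => [->|ne2]; lia.
have := claim i hi; lia.
Qed.

Definition mono (lo hi : nat) m (c d : nat) : 'X_{1..N} :=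
  [multinom (if (i : nat) == lo then c else if (i : nat) == hi then d else m i) | i < N].

Lemma mget_mono lo hi m c d x : x < N ->
  mget (mono lo hi m c d) x = if x == lo then c else if x == hi then d else mget m x.
Proof. by move=> lt; rewrite -[x]/(nat_of_ord (Ordinal lt)) mget_ord mnmE -mget_ord. Qed.

Definition cntf m t := count (fun y => t < y) (mseq m).

Lemma cntfE m t : cntf m t = \sum_(0 <= x < N) (t < mget m x).
Proof.
rewrite /cntf mseqE count_map -sum1_count big_mkcond /index_iota subn0 /=.
by apply: eq_bigr => x _; case: (t < mget m x).
Qed.

Lemma split2 (F : nat -> nat) lo hi : lo != hi -> lo < N -> hi < N ->
  \sum_(0 <= x < N) F x = \sum_(0 <= x < N | (x != lo) && (x != hi)) F x + F lo + F hi.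
Proof.
move=> ne hlo hhi.
have claim : forall n, \sum_(0 <= x < n) F x =
   \sum_(0 <= x < n | (x != lo) && (x != hi)) F x + (lo < n) * F lo + (hi < n) * F hi.
  elim=> [|n IH]; first by rewrite !big_geq //.
  rewrite [in RHS]big_mkcond !big_nat_recr //= -[in RHS]big_mkcond IH /=.
  case: (eqVneq n lo) => [e1|n1]; case: (eqVneq n hi) => [e2|n2].
  - by move: ne; rewrite -e1 -e2 eqxx.
  - by subst n; rewrite ?eqxx ?ne ?andbF /=; lia.
  - by subst n; rewrite ?eqxx ?ne ?andbF /=; lia.
  - by rewrite ?n1 ?n2 /=; lia.
by rewrite claim hlo hhi !mul1n.
Qed.

Lemma sum_lt_x M x : x <= M -> \sum_(0 <= t < M) (t < x) = x.
Proof.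
have gen : forall M, \sum_(0 <= t < M) (t < x) = minn x M.
  elim=> [|n IH]; first by rewrite big_geq // minn0.
  rewrite big_nat_recr //= IH; lia.
by move=> h; rewrite gen; lia.
Qed.

Lemma sumn_take_thr (s : seq nat) k M : sorted geq s -> (forall x, x \in s -> x <= M) ->
  sumn (take k s) = \sum_(0 <= t < M) minn k (count (fun y => t < y) s).
Proof.
elim: s k => [|x s IH] k hs hM.
  by rewrite /= big1 // => t _; rewrite minn0.
case: k => [|k]; first by rewrite /= big1 // => t _; rewrite min0n.
have hs' : sorted geq s := path_sorted hs.
have hall : all (geq x) s := order_path_min geq_trans hs.
rewrite /= (IH k hs'); last by move=> y hy; apply: hM; rewrite inE hy orbT.
have hxM : x <= M by apply: hM; rewrite inE eqxx.
rewrite -{1}(sum_lt_x hxM) -big_split /=; apply: eq_bigr => t _.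
case: (ltnP t x) => htx.
  by rewrite add1n; lia.
have -> : count (fun y => t < y) s = 0%N.
  apply/eqP; rewrite -leqn0 leqNgt -has_count; apply/hasP => -[y hy hty].
  by move/allP: hall => /(_ y hy) /= hyx; lia.
by rewrite !minn0.
Qed.

Lemma topk_thr m k M : (forall x, mget m x <= M) ->
  sumn (take k (decr (mseq m))) = \sum_(0 <= t < M) minn k (cntf m t).
Proof.
move=> hM; rewrite (sumn_take_thr k (M := M)).
- by apply: eq_bigr => t _; rewrite decr_count.
- exact: (sort_sorted geq_total).
move=> x; rewrite /decr mem_sort => /(nthP 0%N) [i _ <-]; exact: hM.
Qed.

Definition Fthr (R : nat -> nat) M k x y :=
  \sum_(0 <= t < M) minn k (R t + (t < x) + (t < y)).

Lemma F_step R M k c d : (forall t t', t <= t' -> R t' <= R t) ->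
  d <= c -> 0 < d -> c < M -> Fthr R M k c d <= Fthr R M k c.+1 d.-1.
Proof.
move=> hR hdc hd hcM.
have claim : forall n, \sum_(0 <= t < n) minn k (R t + (t < c.+1) + (t < d.-1))
    + (d.-1 < n) * minn k (R d.-1 + 2) + (c < n) * minn k (R c)
  = \sum_(0 <= t < n) minn k (R t + (t < c) + (t < d))
    + (d.-1 < n) * minn k (R d.-1 + 1) + (c < n) * minn k (R c + 1).
  elim=> [|n IH]; first by rewrite !big_geq.
  rewrite !big_nat_recr //=.
  move: IH; case: (eqVneq n c) => [->|nc]; last case: (eqVneq n d.-1) => [->|nd]; lia.
have := claim M; have := hR _ _ (leq_trans (leq_pred d) hdc); rewrite /Fthr; lia.
Qed.

Lemma F_iter R M k c d n : (forall t t', t <= t' -> R t' <= R t) ->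
  d <= c -> n <= d -> c + n <= M -> Fthr R M k c d <= Fthr R M k (c + n) (d - n).
Proof.
move=> hR hdc; elim: n => [|n IH] hnd hcM; first by rewrite addn0 subn0.
apply: leq_trans (IH _ _) _; [lia|lia|].
have -> : (c + n.+1 = (c + n).+1)%N by rewrite addnS.
have -> : (d - n.+1 = (d - n).-1)%N by rewrite subnS.
apply: F_step => //; lia.
Qed.

Lemma F_sym R M k x y : Fthr R M k x y = Fthr R M k y x.
Proof. by apply: eq_bigr => t _; rewrite addnAC. Qed.

Lemma major m lo hi c d : lo != hi -> lo < N -> hi < N ->
  (c + d = mget m lo + mget m hi)%N ->
  minn (mget m lo) (mget m hi) < c < maxn (mget m lo) (mget m hi) ->
  minn (mget m lo) (mget m hi) < d < maxn (mget m lo) (mget m hi) ->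
  decr (mseq (mono lo hi m c d)) != decr (mseq m) /\
  Defs.dom N (decr (mseq (mono lo hi m c d))) (decr (mseq m)).
Proof.
move=> ne hlo hhi hsum hc hd.
set a := mget m lo in hsum hc hd *; set b := mget m hi in hsum hc hd *.
set m' := mono lo hi m c d.
set R := fun t => \sum_(0 <= x < N | (x != lo) && (x != hi)) (t < mget m x).
have hRm : forall t, cntf m t = (R t + (t < a) + (t < b))%N.
  by move=> t; rewrite cntfE (split2 _ ne hlo hhi).
have hRm' : forall t, cntf m' t = (R t + (t < c) + (t < d))%N.
  move=> t; rewrite cntfE (split2 _ ne hlo hhi) !mget_mono // eqxx [hi == lo]eq_sym (negbTE ne) eqxx.
  congr (_ + _ + _)%N; rewrite /R big_nat_cond [RHS]big_nat_cond.
  apply: eq_bigr => x /andP[/andP[_ hx] /andP[h1 h2]].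
  by rewrite mget_mono // (negbTE h1) (negbTE h2).
have hRmono : forall t t', t <= t' -> R t' <= R t.
  by move=> t t' htt; apply: leq_sum => x _; case: (ltnP t' (mget m x)) => //=; lia.
set M := sumn (mseq m).
have haM : a <= M by apply: mget_le_sumn.
have hbM : b <= M by apply: mget_le_sumn.
have hM : forall x, mget m' x <= M.
  move=> x; case: (ltnP x N) => hx.
    rewrite mget_mono //; case: eqP => _; first lia.
    by case: eqP => _; [lia|apply: mget_le_sumn].
  by rewrite /mget nth_default ?size_mseq.
split.
  apply/eqP => e; have := congr1 (count (fun y => maxn c d < y)) e.
  rewrite !decr_count -/(cntf m' _) -/(cntf m _) hRm hRm'; lia.
apply/forallP => i.
rewrite (topk_thr _ (M := M)) // (topk_thr _ (M := M)); last by move=> x; apply: mget_le_sumn.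
rewrite (eq_bigr _ (fun t _ => congr1 (minn i) (hRm' t))) (eq_bigr _ (fun t _ => congr1 (minn i) (hRm t))).
rewrite -!/(Fthr R M i _ _).
have hF : forall x y, Fthr R M i x y = Fthr R M i (maxn x y) (minn x y).
  by move=> x y; case: (leqP x y) => h; rewrite ?(maxn_idPr (ltnW h)) ?(minn_idPl (ltnW h))
     ?(maxn_idPl h) ?(minn_idPr h) // F_sym.
rewrite (hF c d) (hF a b).
have hcd : minn c d <= maxn c d by lia.
have := F_iter i hRmono (n := maxn a b - maxn c d) hcd.
have -> : (maxn c d + (maxn a b - maxn c d) = maxn a b)%N by lia.
have -> : (minn c d - (maxn a b - maxn c d) = minn a b)%N by lia.
apply; lia.
Qed.

End Comb.

Import GRing.Theory.
Local Open Scope ring_scope.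

Section Alg.
Variables (K : fieldType) (q s : K) (N : nat) (lam : seq nat) (T : Tab N lam).
Local Notation V := (Vec K N lam).
Local Notation Md := {ffun Tab N lam -> {mpoly K[N]}}.
Local Notation X := (@mpolyX N K).
Local Notation actT := (@actT K s N lam).
Local Notation actH := (@actH K s N lam).
Local Notation tens := (@tens K N lam).
Local Notation swp := (@swp K N).
Local Notation shiftq := (@shiftq K q N).
Local Notation opw := (@opw K q s N lam).
Local Notation ddiff := (@ddiff K N).
Implicit Types (g : 'I_N.-1) (u : V) (F : Md) (m : 'X_{1..N}).

Lemma actT_D g (u1 u2 : V) : actT g (u1 + u2) = actT g u1 + actT g u2.
Proof. by rewrite /actT -big_split; apply: eq_bigr => t _; rewrite ffunE scalerDl. Qed.

Lemma actT_Z g a (u : V) : actT g (a *: u) = a *: actT g u.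
Proof. by rewrite /actT scaler_sumr; apply: eq_bigr => t _; rewrite ffunE scalerA. Qed.

Lemma actT_0 g : actT g 0 = 0.
Proof. by rewrite /actT big1 // => t _; rewrite ffunE scale0r. Qed.

Definition fT (l : seq 'I_N.-1) (u : V) : V := foldl (fun u g => actT g u) u l.

Lemma fT_D l u1 u2 : fT l (u1 + u2) = fT l u1 + fT l u2.
Proof. by elim: l u1 u2 => [|g l IH] u1 u2 //=; rewrite actT_D IH. Qed.

Lemma fT_Z l a u : fT l (a *: u) = a *: fT l u.
Proof. by elim: l u => [|g l IH] u //=; rewrite actT_Z IH. Qed.

Lemma fT_0 l : fT l 0 = 0.
Proof. by elim: l => [|g l IH] //=; rewrite actT_0. Qed.

Lemma vec_decomp (c : V) : c = \sum_(t : Tab N lam) c t *: tbasis K t.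
Proof.
apply/ffunP => t'; rewrite sum_ffunE (bigD1 t') //= big1 ?addr0.
  by rewrite !ffunE eqxx /GRing.scale /= mulr1.
by move=> t ht; rewrite !ffunE eq_sym (negbTE ht) /GRing.scale /= mulr0.
Qed.

Lemma fT_sum l (c : V) : fT l c = \sum_(t : Tab N lam) c t *: fT l (tbasis K t).
Proof.
rewrite {1}(vec_decomp c) (big_morph (fT l) (fT_D l) (fT_0 l)).
by apply: eq_bigr => t _; rewrite fT_Z.
Qed.

Definition reach (c : V) : Prop := exists h : hecke K N, actH h (tbasis K T) = c.

Lemma reach0 : reach 0.
Proof. by exists [::]; rewrite /actH big_nil. Qed.

Lemma reachD c1 c2 : reach c1 -> reach c2 -> reach (c1 + c2).
Proof. by move=> [h1 <-] [h2 <-]; exists (h1 ++ h2); rewrite /actH big_cat. Qed.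

Lemma reachZ a c : reach c -> reach (a *: c).
Proof.
move=> [h <-]; exists [seq (a * p.1, p.2) | p <- h].
by rewrite /actH big_map scaler_sumr; apply: eq_bigr => p _ /=; rewrite scalerA.
Qed.

Lemma reachT g c : reach c -> reach (actT g c).
Proof.
move=> [h <-]; exists [seq (p.1, rcons p.2 g) | p <- h].
rewrite /actH big_map (big_morph (actT g) (actT_D g) (actT_0 g)).
by apply: eq_bigr => p _ /=; rewrite foldl_rcons actT_Z.
Qed.

Lemma reach_fT l c : reach c -> reach (fT l c).
Proof. by elim: l c => [|g l IH] c //= hc; apply: IH; apply: reachT. Qed.

Lemma reach_tb : reach (tbasis K T).
Proof. by exists [:: (1, [::])]; rewrite /actH big_seq1 /= scale1r. Qed.

Lemma tensDr (p : {mpoly K[N]}) (u1 u2 : V) : tens p (u1 + u2) = tens p u1 + tens p u2.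
Proof. by apply/ffunP => t; rewrite !ffunE scalerDl. Qed.

Lemma tensDl (p1 p2 : {mpoly K[N]}) (u : V) : tens (p1 + p2) u = tens p1 u + tens p2 u.
Proof. by apply/ffunP => t; rewrite !ffunE scalerDr. Qed.

Lemma tensZr (p : {mpoly K[N]}) a (u : V) : tens p (a *: u) = a *: tens p u.
Proof. by apply/ffunP => t; rewrite !ffunE scalerA. Qed.

Lemma tensZl (p : {mpoly K[N]}) a (u : V) : tens (a *: p) u = tens p (a *: u).
Proof. by apply/ffunP => t; rewrite !ffunE !scalerA [_ * a]mulrC. Qed.

Lemma tens0r (p : {mpoly K[N]}) : tens p (0 : V) = 0.
Proof. by apply/ffunP => t; rewrite !ffunE scale0r. Qed.

Lemma tens0l (u : V) : tens 0 u = 0.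
Proof. by apply/ffunP => t; rewrite !ffunE scaler0. Qed.

Lemma tensNl (p : {mpoly K[N]}) (u : V) : tens (- p) u = tens p (- u).
Proof. by apply/ffunP => t; rewrite !ffunE scalerN scaleNr. Qed.

Lemma tens_suml (I : Type) (r : seq I) (F : I -> {mpoly K[N]}) (u : V) :
  tens (\sum_(i <- r) F i) u = \sum_(i <- r) tens (F i) u.
Proof. exact: (big_morph (fun p => tens p u) (fun p1 p2 => tensDl p1 p2 u) (tens0l u)). Qed.

Definition Good (P : 'X_{1..N} -> Prop) (F : Md) :=
  exists l : seq ('X_{1..N} * V), F = \sum_(x <- l) tens (X x.1) x.2 /\
    forall x, x \in l -> P x.1 /\ reach x.2.

Lemma Good0 P : Good P 0.
Proof. by exists [::]; rewrite big_nil. Qed.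

Lemma GoodD P F1 F2 : Good P F1 -> Good P F2 -> Good P (F1 + F2).
Proof.
move=> [l1 [-> h1]] [l2 [-> h2]]; exists (l1 ++ l2); rewrite big_cat; split => // x.
by rewrite mem_cat => /orP[/h1|/h2].
Qed.

Lemma GoodZ P a F : Good P F -> Good P (a *: F).
Proof.
move=> [l [-> h]]; exists [seq (x.1, a *: x.2) | x <- l]; split.
  by rewrite big_map scaler_sumr; apply: eq_bigr => x _; rewrite tensZr.
move=> y /mapP[x hx ->] /=; have [h1 h2] := h x hx; split => //; exact: reachZ.
Qed.

Lemma GoodN P F : Good P F -> Good P (- F).
Proof. by move=> h; rewrite -scaleN1r; apply: GoodZ. Qed.

Lemma Good_tens P m c : P m -> reach c -> Good P (tens (X m) c).
Proof.
by move=> hm hc; exists [:: (m, c)]; rewrite big_seq1; split => // x; rewrite inE => /eqP ->.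
Qed.

Lemma Good_sum P (I : Type) (r : seq I) (F : I -> Md) :
  (forall i, Good P (F i)) -> Good P (\sum_(i <- r) F i).
Proof.
move=> h; elim: r => [|i r IH]; first by rewrite big_nil; apply: Good0.
by rewrite big_cons; apply: GoodD.
Qed.

Lemma Good_map P P' (O : Md -> Md) : O 0 = 0 -> (forall F1 F2, O (F1 + F2) = O F1 + O F2) ->
  (forall m c, P m -> reach c -> Good P' (O (tens (X m) c))) ->
  forall F, Good P F -> Good P' (O F).
Proof.
move=> h0 hD h F [l [-> hl]]; rewrite (big_morph O hD h0).
elim: l hl => [|x l IH] hl; first by rewrite big_nil; apply: Good0.
rewrite big_cons; apply: GoodD.
  by have [h1 h2] := hl x (mem_head _ _); apply: h.
by apply: IH => y hy; apply: hl; rewrite inE hy orbT.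
Qed.

Lemma Good_weak (P P' : 'X_{1..N} -> Prop) F : (forall m, P m -> P' m) -> Good P F -> Good P' F.
Proof. by move=> hP [l [-> h]]; exists l; split => // x /h [/hP]. Qed.

Lemma val_hi g : (hi g : nat) = g.+1.
Proof. rewrite /hi val_insubd; case: ifP => // h; move: (ltn_ord g) h; lia. Qed.

Lemma val_lo g : (lo g : nat) = g.
Proof. by []. Qed.

Lemma lo_neq_hi g : (lo g : nat) != hi g.
Proof. by rewrite val_hi val_lo; lia. Qed.

Lemma val_tperm (x y z : 'I_N) : val (tperm x y z) = swpf x y z.
Proof.
rewrite /swpf !(inj_eq val_inj).
case: (eqVneq z x) => [->|n1]; first by rewrite tpermL.
case: (eqVneq z y) => [->|n2]; first by rewrite tpermR.
by rewrite tpermD // eq_sym.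
Qed.

Lemma prodX_reindex (rho : 'I_N -> 'I_N) (hr : injective rho) m (m' : 'X_{1..N}) :
  (forall i, m' (rho i) = m i) -> \prod_(i < N) 'X_(rho i) ^+ (m i) = X m'.
Proof.
move=> h; rewrite [RHS]mpolyXE_id [RHS](reindex_inj hr); apply: eq_bigr => i _; by rewrite h.
Qed.

Lemma swpX g m : swp g (X m) = X (rix (swpf (lo g) (hi g)) m).
Proof.
rewrite /swp comp_mpolyX.
rewrite (eq_bigr (fun i => 'X_(tperm (lo g) (hi g) i) ^+ m i)); last first.
  by move=> i _; rewrite tnth_mktuple.
apply: prodX_reindex; first exact: perm_inj.
by move=> i; rewrite -mget_ord mget_rix ?ltn_ord // val_tperm swpf_inv mget_ord.
Qed.

Definition rotf (x : nat) : nat := if x.+1 == N then 0%N else x.+1.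
Definition kappa m : K := \prod_(i < N) (if (i : nat) == 0%N then q else 1) ^+ m i.

Lemma shiftqX m : shiftq (X m) = kappa m *: X (rix rotf m).
Proof.
rewrite /shiftq comp_mpolyX.
pose rho (i : 'I_N) : 'I_N := if (i : nat) == 0%N then rev_ord i else insubd i i.-1.
have vr : forall k : 'I_N, nat_of_ord (rho k) = (if (k : nat) == 0%N then N.-1 else k.-1)%N.
  move=> k; rewrite /rho; case: eqP => h /=; first by rewrite h; lia.
  by rewrite val_insubd; case: ifP => // h2; move: (ltn_ord k) h2; lia.
rewrite (eq_bigr (fun i : 'I_N => ((if (i:nat) == 0%N then q else 1) ^+ m i) *: ('X_(rho i) ^+ m i))); last first.
  by move=> i _; rewrite tnth_mktuple /rho; case: eqP => _; rewrite ?exprZn ?expr1n ?scale1r.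
rewrite scaler_prod; congr (_ *: _); apply: prodX_reindex.
  move=> i j e; apply: ord_inj; move: (congr1 (@nat_of_ord N) e); rewrite !vr.
  by move: (ltn_ord i) (ltn_ord j); case: eqP => ?; case: eqP => ?; lia.
move=> i; rewrite -mget_ord mget_rix ?ltn_ord // vr -mget_ord /rotf; congr (mget m _).
have hi := ltn_ord i.
case: (eqVneq (nat_of_ord i) 0%N) => h0.
  by rewrite h0 /= (_ : N.-1.+1 = N) ?eqxx //; lia.
rewrite ifN // (_ : i.-1.+1 = i).
all: try by [] ; try by rewrite neq_ltn hi. all: move: h0 hi; lia.
Qed.

Lemma mget_add (m1 m2 : 'X_{1..N}) x : (x < N)%N -> mget (m1 + m2)%MM x = (mget m1 x + mget m2 x)%N.
Proof. by move=> hx; rewrite -[x]/(nat_of_ord (Ordinal hx)) !mget_ord mnmDE. Qed.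

Lemma mget_Un (i : 'I_N) c x : (x < N)%N -> mget (U_(i) *+ c)%MM x = (((i : nat) == x) * c)%N.
Proof. by move=> hx; rewrite -[x]/(nat_of_ord (Ordinal hx)) !mget_ord mulmnE mnm1E. Qed.

Lemma monoE g m c d : X (mono (lo g) (hi g) m c d)
  = X (mono (lo g) (hi g) m 0 0) * 'X_(lo g) ^+ c * 'X_(hi g) ^+ d.
Proof.
rewrite !mpolyXn -!mpolyXD; congr mpolyX; apply: mnm_eq => x hx.
rewrite mget_mono // !mget_add // mget_mono // !mget_Un //.
have ne := lo_neq_hi g.
case: (eqVneq x (lo g)) => [->|n1].
  by rewrite ?eqxx [(hi g : nat) == lo g]eq_sym (negbTE ne); lia.
case: eqP => e2; lia.
Qed.

Lemma mono_self g m : mono (lo g) (hi g) m (mget m (lo g)) (mget m (hi g)) = m.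
Proof.
apply: mnm_eq => x hx; rewrite mget_mono //.
by case: eqP => [e|_]; [subst x|case: eqP => [e|_]; [subst x|]].
Qed.

Lemma mono_swp g m : mono (lo g) (hi g) m (mget m (hi g)) (mget m (lo g)) = rix (swpf (lo g) (hi g)) m.
Proof.
apply: mnm_eq => x hx; rewrite mget_mono // mget_rix // /swpf.
by case: eqP => [e|_]; [subst x|case: eqP => [e|_]; [subst x|]].
Qed.

Lemma tele (R : comNzRingType) (x y : R) c d n :
  (x - y) * \sum_(k < n) x ^+ (c + k) * y ^+ (d + (n - k))
  = x ^+ (c + n) * y ^+ d.+1 - x ^+ c * y ^+ (d + n).+1.
Proof.
elim: n => [|n IH]; first by rewrite big_ord0 mulr0 !addn0 subrr.
rewrite big_ord_recr /= subSnn addn1.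
rewrite (eq_bigr (fun k : 'I_n => y * (x ^+ (c + k) * y ^+ (d + (n - k))))); last first.
  move=> k _; rewrite /= subSn; last exact: ltnW (ltn_ord k).
  by rewrite addnS exprS; ring.
rewrite -big_distrr /= mulrDr (mulrA (x - y) y) (mulrC (x - y) y) -mulrA IH.
rewrite !addnS !exprS !exprD; ring.
Qed.

Definition Dm g m : {mpoly K[N]} :=
  let a := mget m (lo g) in let b := mget m (hi g) in
  if (b <= a)%N then \sum_(k < a - b) X (mono (lo g) (hi g) m (b + k) (a - k))
  else - \sum_(k < b - a) X (mono (lo g) (hi g) m (a + k) (b - k)).

Lemma DmP g m : Dm g m * ('X_(lo g) - 'X_(hi g)) = 'X_(hi g) * (X m - swp g (X m)).
Proof.
rewrite swpX -mono_swp /Dm.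
set a := mget m (lo g); set b := mget m (hi g).
set Z := X (mono (lo g) (hi g) m 0 0); set x := 'X_(lo g); set y := 'X_(hi g).
have eXm : X m = Z * x ^+ a * y ^+ b by rewrite -monoE mono_self.
rewrite eXm monoE -/Z -/x -/y.
case: leqP => hab.
  have S : \sum_(k < a - b) X (mono (lo g) (hi g) m (b + k) (a - k))
      = Z * \sum_(k < a - b) x ^+ (b + k) * y ^+ (b + (a - b - k)).
    rewrite big_distrr; apply: eq_bigr => k _; rewrite monoE -/Z -/x -/y.
    rewrite (_ : (a - k = b + (a - b - k))%N); first by rewrite -mulrA.
    by have := ltn_ord k; lia.
  have Te := tele x y b b (a - b); rewrite subnKC // in Te.
  rewrite S -mulrA [_ * (x - y)]mulrC Te !exprS; ring.
have S : \sum_(k < b - a) X (mono (lo g) (hi g) m (a + k) (b - k))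
    = Z * \sum_(k < b - a) x ^+ (a + k) * y ^+ (a + (b - a - k)).
  rewrite big_distrr; apply: eq_bigr => k _; rewrite monoE -/Z -/x -/y.
  rewrite (_ : (b - k = a + (b - a - k))%N); first by rewrite -mulrA.
  by have := ltn_ord k; lia.
have Te := tele x y a a (b - a); rewrite subnKC ?(ltnW hab) // in Te.
rewrite S; set Sg := (\sum_(k < b - a) _).
have -> : - (Z * Sg) * (x - y) = - Z * ((x - y) * Sg) by ring.
rewrite Te !exprS; ring.
Qed.

Lemma Xdiff_neq0 g : 'X_(lo g) - 'X_(hi g) != 0 :> {mpoly K[N]}.
Proof.
rewrite subr_eq0; apply/negP => /eqP e.
have := congr1 (mcoeff U_(lo g)) e; rewrite !mcoeffX eqxx.
have hne : hi g != lo g by apply/eqP => e'; move: (congr1 (@nat_of_ord N) e'); rewrite val_hi /=; lia.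
have -> : (U_(hi g) == U_(lo g))%MM = false.
  apply/negbTE/eqP => /mnmP /(_ (lo g)); rewrite !mnm1E eqxx (negbTE hne) //.
by move/eqP; rewrite oner_eq0.
Qed.

Lemma swp0 g : swp g 0 = 0. Proof. exact: comp_mpoly0. Qed.
Lemma swpD g p1 p2 : swp g (p1 + p2) = swp g p1 + swp g p2. Proof. exact: comp_mpolyD. Qed.
Lemma swpZ g a p : swp g (a *: p) = a *: swp g p. Proof. exact: comp_mpolyZ. Qed.

Lemma ddiff_ex g p : exists r, r * ('X_(lo g) - 'X_(hi g)) = 'X_(hi g) * (p - swp g p).
Proof.
elim/mpolyind: p => [|c m p _ _ [r hr]]; first by exists 0; rewrite swp0 subrr mulr0 mul0r.
exists (c *: Dm g m + r); rewrite mulrDl hr -scalerAl DmP swpD swpZ.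
rewrite scalerAr -mulrDr; congr (_ * _).
by rewrite scalerBr opprD addrACA.
Qed.

Lemma ddiffP g p : ddiff g p * ('X_(lo g) - 'X_(hi g)) = 'X_(hi g) * (p - swp g p).
Proof. exact: (epsilon_spec _ _ (ddiff_ex g p)). Qed.

Lemma ddiff_spec g p r : r * ('X_(lo g) - 'X_(hi g)) = 'X_(hi g) * (p - swp g p) -> ddiff g p = r.
Proof.
move=> hr; apply/eqP; rewrite -subr_eq0.
have := Xdiff_neq0 g => hn.
have : (ddiff g p - r) * ('X_(lo g) - 'X_(hi g)) = 0 by rewrite mulrBl ddiffP hr subrr.
by move/eqP; rewrite mulf_eq0 (negbTE hn) orbF.
Qed.

Lemma ddiffD g p1 p2 : ddiff g (p1 + p2) = ddiff g p1 + ddiff g p2.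
Proof.
apply: ddiff_spec; rewrite mulrDl !ddiffP swpD -mulrDr; congr (_ * _).
by rewrite opprD addrACA.
Qed.

Lemma ddiffZ g a p : ddiff g (a *: p) = a *: ddiff g p.
Proof. by apply: ddiff_spec; rewrite -scalerAl ddiffP swpZ -scalerBr scalerAr. Qed.

Lemma ddiffX g m : ddiff g (X m) = Dm g m.
Proof. by apply: ddiff_spec; rewrite DmP. Qed.

Lemma ddiff0 g : ddiff g 0 = 0.
Proof. by apply: ddiff_spec; rewrite mul0r swp0 subrr mulr0. Qed.

Lemma opT_0 g : opT s g (0 : Md) = 0.
Proof.
apply/ffunP => t'; rewrite !ffunE ddiff0 scaler0 add0r big1 // => t _.
by rewrite ffunE swp0 scaler0.
Qed.

Lemma opT_D g F1 F2 : opT s g (F1 + F2) = opT s g F1 + opT s g F2.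
Proof.
apply/ffunP => t'; rewrite !ffunE ddiffD scalerDr addrACA -big_split /=; congr (_ + _).
by apply: eq_bigr => t _; rewrite ffunE swpD scalerDr.
Qed.

Lemma actT_ap g u (t' : Tab N lam) : actT g u t' = \sum_(t : Tab N lam) u t * tabT s g t t'.
Proof. by rewrite /actT sum_ffunE; apply: eq_bigr => t _; rewrite ffunE. Qed.

Lemma opT_tens g m u : opT s g (tens (X m) u)
  = tens (Dm g m) ((1 - s) *: u) + tens (X (rix (swpf (lo g) (hi g)) m)) (actT g u).
Proof.
apply/ffunP => t'; rewrite !ffunE ddiffZ ddiffX scalerA actT_ap scaler_suml; congr (_ + _).
by apply: eq_bigr => t _; rewrite /Defs.tens ffunE swpZ swpX scalerA mulrC.
Qed.

Lemma opTinv_0 g : opTinv s g (0 : Md) = 0.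
Proof. by rewrite /opTinv opT_0 scaler0 addr0 scaler0. Qed.

Lemma opTinv_D g F1 F2 : opTinv s g (F1 + F2) = opTinv s g F1 + opTinv s g F2.
Proof. by rewrite /opTinv opT_D [(1 - s) *: _]scalerDr addrACA -scalerDr. Qed.

Lemma shiftq0 : shiftq (0 : {mpoly K[N]}) = 0. Proof. exact: comp_mpoly0. Qed.
Lemma shiftqD p1 p2 : shiftq (p1 + p2) = shiftq p1 + shiftq p2. Proof. exact: comp_mpolyD. Qed.
Lemma shiftqZ a p : shiftq (a *: p) = a *: shiftq p. Proof. exact: comp_mpolyZ. Qed.

Lemma opw_0 : opw (0 : Md) = 0.
Proof. by apply/ffunP => t'; rewrite !ffunE big1 // => t _; rewrite ffunE shiftq0 scaler0. Qed.

Lemma opw_D F1 F2 : opw (F1 + F2) = opw F1 + opw F2.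
Proof.
apply/ffunP => t'; rewrite !ffunE -big_split /=.
by apply: eq_bigr => t _; rewrite ffunE shiftqD scalerDr.
Qed.

Lemma opw_tens m u : opw (tens (X m) u)
  = tens (X (rix rotf m)) (kappa m *: fT (enum 'I_N.-1) u).
Proof.
apply/ffunP => t'; rewrite !ffunE fT_sum sum_ffunE scaler_sumr scaler_suml.
apply: eq_bigr => t _; rewrite !ffunE shiftqZ shiftqX !scalerA.
rewrite ?ffunE; congr (_ *: _); rewrite /GRing.scale /=.
change (Defs.allT s (tbasis K t)) with (fT (enum 'I_N.-1) (tbasis K t)); ring.
Qed.

Definition srcn (p j x : nat) : nat :=
  (if x == j then p else if (p <= x) && (x < j) then x.+1
  else if (j < x) && (x <= p) then x.-1 else x)%N.

Ltac splitif := repeat match goal with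
  | |- context [if ?b then _ else _] =>
      lazymatch b with context [if _ then _ else _] => fail | _ =>
        let H := fresh "H" in case H : b => /= end
  end.

Lemma srcn_lt p j x : (p < N -> j < N -> x < N -> srcn p j x < N)%N.
Proof. rewrite /srcn; splitif; lia. Qed.
Lemma srcn_inv p j x : (p < N -> j < N -> x < N -> srcn j p (srcn p j x) = x)%N.
Proof. rewrite /srcn; splitif; lia. Qed.
Lemma srcn_id j x : srcn j j x = x.
Proof. rewrite /srcn; splitif; lia. Qed.
Lemma srcn_b k j x : (k.+1 <= j)%N -> srcn k.+1 j x = swpf k k.+1 (srcn k j x).
Proof. rewrite /srcn /swpf; splitif; lia. Qed.
Lemma srcn_c i j x : (j <= i)%N -> srcn i.+1 j x = swpf i i.+1 (srcn i j x).
Proof. rewrite /srcn /swpf; splitif; lia. Qed.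
Lemma srcn_d j x : (j < N -> x < N -> srcn 0 j x = rotf (srcn N.-1 j x))%N.
Proof. rewrite /srcn /rotf; splitif; lia. Qed.
Lemma srcn_s1 k j x : (k.+1 <= j)%N -> srcn k j x = srcn k.+1 j (swpf k j x).
Proof. rewrite /srcn /swpf; splitif; lia. Qed.
Lemma srcn_s2 i j x : (j <= i)%N -> srcn i j x = srcn i.+1 j (swpf j i.+1 x).
Proof. rewrite /srcn /swpf; splitif; lia. Qed.

Lemma srcn_jj p j : srcn p j j = p.
Proof. by rewrite /srcn eqxx. Qed.
Lemma srcn_lo k j : (k.+1 <= j)%N -> srcn k.+1 j k = k.
Proof. rewrite /srcn; splitif; lia. Qed.
Lemma srcn_hi2 i j : (j <= i)%N -> srcn i.+1 j i.+1 = i.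
Proof. rewrite /srcn; splitif; lia. Qed.

Lemma rix_ext f f' m : (forall x, x < N -> f x = f' x)%N -> rix f m = rix f' m.
Proof. by move=> h; apply: mnm_eq => x hx; rewrite !mget_rix // h. Qed.

Variables (v : 'X_{1..N}) (jj : nat).
Hypothesis Hjj : (jj < N)%N.

Definition mv p m := rix (srcn p jj) m.
Definition Inv p m : Prop := tle (mv p m) v.

Lemma decr_mv p m : (p < N)%N -> decr (mseq (mv p m)) = decr (mseq m).
Proof.
move=> hp; apply: (decr_rix (g := srcn jj p)) => x hx.
- exact: srcn_lt.
- exact: srcn_lt.
- exact: srcn_inv.
- exact: srcn_inv.
Qed.

Lemma Inv_lower p p' m m' : (p < N)%N -> (p' < N)%N ->
  decr (mseq m') != decr (mseq m) -> Defs.dom N (decr (mseq m')) (decr (mseq m)) ->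
  Inv p m -> Inv p' m'.
Proof. by rewrite /Inv => hp hp' hne hd; apply: tle_lower; rewrite ?decr_mv. Qed.

Lemma lo_lt g : (lo g < N)%N. Proof. exact: ltn_ord. Qed.
Lemma hi_lt g : (hi g < N)%N. Proof. exact: ltn_ord. Qed.

Lemma Inv_mid g m c d : Inv (hi g) m ->
  (c + d = mget m (lo g) + mget m (hi g))%N ->
  (minn (mget m (lo g)) (mget m (hi g)) < c < maxn (mget m (lo g)) (mget m (hi g)))%N ->
  (minn (mget m (lo g)) (mget m (hi g)) < d < maxn (mget m (lo g)) (mget m (hi g)))%N ->
  Inv (lo g) (mono (lo g) (hi g) m c d).
Proof.
move=> hI hs hc hd; have [h1 h2] := major (lo_neq_hi g) (lo_lt g) (hi_lt g) hs hc hd.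
exact: (Inv_lower (hi_lt g) (lo_lt g) h1 h2 hI).
Qed.

Lemma mv_sw_b g m : (hi g <= jj)%N -> mv (lo g) (rix (swpf (lo g) (hi g)) m) = mv (hi g) m.
Proof.
move=> h; rewrite /mv rix_comp; last by move=> x hx; apply: srcn_lt => //; apply: lo_lt.
by apply: rix_ext => x hx; rewrite val_hi val_lo srcn_b // -val_hi.
Qed.

Lemma mv_sw_c g m : (jj <= lo g)%N -> mv (lo g) (rix (swpf (lo g) (hi g)) m) = mv (hi g) m.
Proof.
move=> h; rewrite /mv rix_comp; last by move=> x hx; apply: srcn_lt => //; apply: lo_lt.
by apply: rix_ext => x hx; rewrite val_hi val_lo srcn_c.
Qed.

Lemma Inv_stay1 g m : (hi g <= jj)%N -> (mget m (hi g) <= mget m (lo g))%N ->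
  Inv (hi g) m -> Inv (lo g) m.
Proof.
move=> h hab; rewrite /Inv.
have -> : mv (lo g) m = rix (swpf (lo g) jj) (mv (hi g) m).
  rewrite /mv rix_comp; last by move=> x hx; apply: swpf_lt => //; apply: lo_lt.
  by apply: rix_ext => x hx; rewrite val_hi val_lo srcn_s1 // -val_hi.
apply: tle_same; first by rewrite decr_swp //; apply: lo_lt.
apply: dom_swap => //; first by move: h; rewrite val_hi val_lo.
rewrite /mv !mget_rix ?lo_lt // srcn_jj val_hi val_lo srcn_lo //; move: h hab; rewrite val_hi val_lo //.
Qed.

Lemma Inv_stay2 g m : (jj <= lo g)%N -> (mget m (lo g) <= mget m (hi g))%N ->
  Inv (hi g) m -> Inv (lo g) m.
Proof.
move=> h hab; rewrite /Inv.
have -> : mv (lo g) m = rix (swpf jj (hi g)) (mv (hi g) m).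
  rewrite /mv rix_comp; last by move=> x hx; apply: swpf_lt => //; apply: hi_lt.
  by apply: rix_ext => x hx; rewrite val_hi val_lo srcn_s2 // -val_hi.
apply: tle_same; first by rewrite decr_swp //; apply: hi_lt.
apply: dom_swap; first by move: h; rewrite val_hi val_lo; lia.
  exact: hi_lt.
rewrite /mv !mget_rix ?hi_lt // srcn_jj val_hi srcn_hi2 //; move: hab; rewrite val_hi. by [].
Qed.

Lemma reachN u : reach u -> reach (- u).
Proof. by move=> h; rewrite -scaleN1r; apply: reachZ. Qed.

Lemma Good_Dm (P : 'X_{1..N} -> Prop) g m u : reach u ->
  P (rix (swpf (lo g) (hi g)) m) ->
  ((mget m (lo g) < mget m (hi g))%N -> P m) ->
  (forall c d, (c + d = mget m (lo g) + mget m (hi g))%N ->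
    (minn (mget m (lo g)) (mget m (hi g)) < c < maxn (mget m (lo g)) (mget m (hi g)))%N ->
    (minn (mget m (lo g)) (mget m (hi g)) < d < maxn (mget m (lo g)) (mget m (hi g)))%N ->
    P (mono (lo g) (hi g) m c d)) ->
  Good P (tens (Dm g m) u).
Proof.
move=> hu hsw hst hmid; rewrite /Dm; case: leqP => hab.
  rewrite tens_suml; apply: Good_sum => k; apply: Good_tens => //.
  case: (eqVneq (k : nat) 0%N) => [k0|kn0].
    by rewrite k0 addn0 subn0 mono_swp.
  by apply: hmid; have := ltn_ord k; lia.
rewrite tensNl tens_suml; apply: Good_sum => k; apply: Good_tens; last exact: reachN.
case: (eqVneq (k : nat) 0%N) => [k0|kn0].
  by rewrite k0 addn0 subn0 mono_self; apply: hst.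
by apply: hmid; have := ltn_ord k; lia.
Qed.

Lemma Good_Dm_plus (P : 'X_{1..N} -> Prop) g m u : reach u ->
  (mget m (lo g) < mget m (hi g))%N ->
  (forall c d, (c + d = mget m (lo g) + mget m (hi g))%N ->
    (minn (mget m (lo g)) (mget m (hi g)) < c < maxn (mget m (lo g)) (mget m (hi g)))%N ->
    (minn (mget m (lo g)) (mget m (hi g)) < d < maxn (mget m (lo g)) (mget m (hi g)))%N ->
    P (mono (lo g) (hi g) m c d)) ->
  Good P (tens (Dm g m + X m) u).
Proof.
move=> hu hab hmid; rewrite /Dm leqNgt hab /=.
case hn : (mget m (hi g) - mget m (lo g))%N => [|n]; first lia.
rewrite big_ord_recl /= addn0 subn0 mono_self.
set S := \sum_(i < n) _.
rewrite (_ : - (X m + S) + X m = - S); last by ring.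
rewrite tensNl tens_suml; apply: Good_sum => k; apply: Good_tens; last exact: reachN.
by apply: hmid; rewrite /bump /=; move: hn (ltn_ord k); rewrite /=; lia.
Qed.

Lemma step2 g F : (jj <= lo g)%N -> Good (Inv (hi g)) F -> Good (Inv (lo g)) (opT s g F).
Proof.
move=> h; apply: Good_map; [exact: opT_0 | exact: opT_D | move=> m u hm hu].
have hsw : Inv (lo g) (rix (swpf (lo g) (hi g)) m) by rewrite /Inv mv_sw_c.
rewrite opT_tens; apply: GoodD; last by apply: Good_tens => //; apply: reachT.
apply: Good_Dm => //; first exact: reachZ.
  by move=> hab; apply: Inv_stay2 => //; apply: ltnW.
by move=> c d; apply: Inv_mid.
Qed.

Lemma step1 g F : (hi g <= jj)%N -> Good (Inv (hi g)) F -> Good (Inv (lo g)) (opTinv s g F).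
Proof.
move=> h; apply: Good_map; [exact: opTinv_0 | exact: opTinv_D | move=> m u hm hu].
have hsw : Inv (lo g) (rix (swpf (lo g) (hi g)) m) by rewrite /Inv mv_sw_b.
rewrite /opTinv opT_tens; apply: GoodZ.
case: (leqP (mget m (hi g)) (mget m (lo g))) => hab.
  apply: GoodD; first apply: GoodD.
  - apply: Good_Dm => //; first exact: reachZ.
      by move=> h'; lia.
    by move=> c d; apply: Inv_mid.
  - by apply: Good_tens => //; apply: reachT.
  - by apply: GoodZ; apply: Good_tens => //; apply: Inv_stay1.
rewrite -tensZr addrAC -tensDl; apply: GoodD.
  by apply: Good_Dm_plus => //; [exact: reachZ | move=> c d; apply: Inv_mid].
by apply: Good_tens => //; apply: reachT.
Qed.

Lemma stepw F : Good (Inv 0) F -> Good (Inv N.-1) (opw F).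
Proof.
apply: Good_map; [exact: opw_0 | exact: opw_D | move=> m u hm hu].
rewrite opw_tens; apply: Good_tens; last by apply: reachZ; apply: reach_fT.
rewrite /Inv /mv rix_comp; last by move=> x hx; apply: srcn_lt => //; lia.
have -> : rix (fun x => rotf (srcn N.-1 jj x)) m = rix (srcn 0 jj) m.
  by apply: rix_ext => x hx; rewrite srcn_d.
exact: hm.
Qed.

Lemma filter_iota_lt n k : (k <= n)%N -> [seq x <- iota 0 n | (x < k)%N] = iota 0 k.
Proof.
move=> hk; rewrite -(subnKC hk) iotaD filter_cat add0n.
have -> : [seq x <- iota 0 k | (x < k)%N] = iota 0 k.
  by apply/all_filterP/allP => x; rewrite mem_iota add0n; case/andP.
have -> : [seq x <- iota k (n - k) | (x < k)%N] = [::].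
  apply/eqP; rewrite -[_ == _]negbK -has_filter; apply/hasPn => x.
  by rewrite mem_iota => /andP[h1 _]; rewrite -leqNgt.
by rewrite cats0.
Qed.

Lemma filter_iota_ge n k : (k <= n)%N -> [seq x <- iota 0 n | (k <= x)%N] = iota k (n - k).
Proof.
move=> hk; rewrite -{1}(subnKC hk) iotaD filter_cat add0n.
have -> : [seq x <- iota 0 k | (k <= x)%N] = [::].
  apply/eqP; rewrite -[_ == _]negbK -has_filter; apply/hasPn => x.
  by rewrite mem_iota add0n => /andP[_ h]; rewrite -ltnNge.
have -> : [seq x <- iota k (n - k) | (k <= x)%N] = iota k (n - k).
  by apply/all_filterP/allP => x; rewrite mem_iota; case/andP.
by [].
Qed.

Lemma phase1 (l : seq 'I_N.-1) F p : map val l = rev (iota 0 p) -> (p <= jj)%N ->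
  Good (Inv p) F -> Good (Inv 0) (foldl (fun F g => opTinv s g F) F l).
Proof.
elim: l F p => [|g l IH] F p /=.
  by case: p => [|p] //; rewrite -addn1 iotaD rev_cat.
case: p => [|p]; first by [].
rewrite -addn1 iotaD rev_cat /= add0n => -[hg hl] hp hF.
apply: (IH _ p hl); first lia.
have hlo : (lo g : nat) = p by rewrite val_lo.
have hhi : (hi g : nat) = p.+1 by rewrite val_hi hg.
rewrite -hlo; apply: step1; rewrite hhi; [lia | by rewrite -addn1].
Qed.

Lemma phase2 (l : seq 'I_N.-1) F p : map val l = rev (iota jj (p - jj)) -> (jj <= p)%N ->
  Good (Inv p) F -> Good (Inv jj) (foldl (fun F g => opT s g F) F l).
Proof.
elim: l F p => [|g l IH] F p /=.
  move=> h hp hF; have e : (p - jj = 0)%N by move/(congr1 size): h; rewrite size_rev size_iota.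
  by have -> : jj = p by lia.
move=> h hp hF; case e : (p - jj)%N h => [|n]; first by [].
rewrite -addn1 iotaD rev_cat /= => -[hg hl].
apply: (IH _ (jj + n)%N); [by rewrite addKn | lia |].
have hlo : (lo g : nat) = (jj + n)%N by rewrite val_lo.
have hhi : (hi g : nat) = p by rewrite val_hi hg; lia.
rewrite -hlo; apply: step2; [by rewrite hlo; lia | by rewrite hhi].
Qed.

Lemma tle_refl : tle v v.
Proof. by rewrite /tle eqxx /=; apply: dom_refl. Qed.

Lemma pipeline (jo : 'I_N) F : (jo : nat) = jj -> Good (Inv jj) F ->
  Good (fun m => tle m v) (opXi q s jo F).
Proof.
move=> ej hF; rewrite /opXi; apply: GoodZ.
have L1 : map val (rev [seq g : 'I_N.-1 <- enum 'I_N.-1 | (g < jo)%N]) = rev (iota 0 jj).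
  rewrite map_rev -(filter_map val (fun x => (x < jo)%N)) val_enum_ord filter_iota_lt -?ej //.
  by move: (ltn_ord jo); lia.
have L2 : map val (rev [seq g : 'I_N.-1 <- enum 'I_N.-1 | (jo <= g)%N]) = rev (iota jj (N.-1 - jj)).
  rewrite map_rev -(filter_map val (fun x => (jo <= x)%N)) val_enum_ord filter_iota_ge -?ej //.
  by move: (ltn_ord jo); lia.
apply: (Good_weak (P := Inv jj)) => [m|].
  by rewrite /Inv /mv rix_id // => x _; apply: srcn_id.
apply: (phase2 (p := N.-1) L2); first lia.
apply: stepw; exact: (phase1 (p := jj) L1).
Qed.

Lemma mdeg_sumn m : mdeg m = sumn (mseq m).
Proof.
rewrite mdegE (eq_bigr (fun i : 'I_N => mget m i)); last by move=> i _; rewrite mget_ord.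
rewrite -(big_mkord xpredT (fun i => mget m i)) -(take_size (mseq m)) size_mseq.
by rewrite sumn_take_nth ?size_mseq.
Qed.

Lemma sumn_decr a : sumn (decr a) = sumn a.
Proof. by apply: perm_sumn; rewrite /decr perm_sort. Qed.

Lemma tle_mdeg w : tle w v -> (mdeg w <= mdeg v)%N.
Proof.
rewrite /tle !mdeg_sumn => h.
have hN : (N < N.+1)%N by [].
case: ifP h => _ /forallP /(_ (Ordinal hN)) /=.
  by rewrite !take_oversize ?size_decr ?size_mseq // !sumn_decr.
by rewrite !take_oversize ?size_mseq.
Qed.

Lemma actH_cat h1 h2 u : actH (h1 ++ h2) u = actH h1 u + actH h2 u.
Proof. by rewrite /Defs.actH big_cat. Qed.

Lemma assemble F : Good (fun m => tle m v) F ->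
  exists H : 'X_{1..N} -> hecke K N,
    F = tens (X v) (actH (H v) (tbasis K T))
      + \sum_(w : 'X_{1..N < (mdeg v).+1} | tlt w v)
          tens (X (w : 'X_{1..N})) (actH (H w) (tbasis K T)).
Proof.
move=> [l [-> hl]].
have key : exists H : 'X_{1..N} -> hecke K N, (forall w, ~~ tle w v -> H w = [::]) /\
    \sum_(x <- l) tens (X x.1) x.2
    = \sum_(w : 'X_{1..N < (mdeg v).+1}) tens (X (w : 'X_{1..N})) (actH (H w) (tbasis K T)).
  elim: l hl => [|x l IH] hl.
    exists (fun _ => [::]); split => //; rewrite big_nil big1 // => w _.
    by rewrite /Defs.actH big_nil tens0r.
  have [hx1 [h hh]] := hl x (mem_head _ _).
  have hl' : forall y, y \in l -> tle y.1 v /\ reach y.2.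
    by move=> y hy; apply: hl; rewrite inE hy orbT.
  have [H [H0 HS]] := IH hl'.
  exists (fun w => if w == x.1 then h ++ H w else H w); split.
    move=> w hw; case: eqP => [e|_]; last exact: H0.
    by move: hw; rewrite e hx1.
  have hb : (mdeg x.1 < (mdeg v).+1)%N by rewrite ltnS; apply: tle_mdeg.
  pose w0 : 'X_{1..N < (mdeg v).+1} := BMultinom hb.
  rewrite big_cons HS (bigD1 w0) //= [in RHS](bigD1 w0) //= eqxx.
  rewrite actH_cat hh tensDr -addrA; congr (_ + _).
  congr (_ + _); apply: eq_bigr => w hw.
  have -> : ((w : 'X_{1..N}) == x.1) = false.
    by apply/negbTE; move: hw; apply: contra => /eqP e; apply/eqP/val_inj.
  by [].
have [H [H0 HS]] := key; exists H; rewrite HS.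
have hv : (mdeg v < (mdeg v).+1)%N by [].
pose vb : 'X_{1..N < (mdeg v).+1} := BMultinom hv.
rewrite (bigD1 vb) //=; congr (_ + _).
rewrite [RHS]big_mkcond [LHS]big_mkcond; apply: eq_bigr => w _.
case: (boolP (tle w v)) => ht.
  rewrite /tlt ht /=.
  by rewrite -(inj_eq val_inj).
by rewrite H0 // /Defs.actH big_nil tens0r; case: ifP; case: ifP.
Qed.

Lemma main_gen (jo : 'I_N) : (jo : nat) = jj ->
  exists H : 'X_{1..N} -> hecke K N,
    opXi q s jo (tens (X v) (tbasis K T))
    = tens (X v) (actH (H v) (tbasis K T))
      + \sum_(w : 'X_{1..N < (mdeg v).+1} | tlt w v)
          tens (X (w : 'X_{1..N})) (actH (H w) (tbasis K T)).
Proof.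
move=> ej; apply: assemble; apply: pipeline => //; apply: Good_tens; last exact: reach_tb.
by rewrite /Inv /mv rix_id => [|x _]; [apply: tle_refl | apply: srcn_id].
Qed.

End Alg.

Theorem theorem3p4 (N : nat) (HN : (2 <= N)%N) (lam : seq nat)
    (Hlam : is_partition N lam) (v : 'X_{1..N}) (T : Tab N lam) (jj : 'I_N) :
  exists H : 'X_{1..N} -> hecke KK N,
    opXi qK sK jj (tens 'X_[v] (tbasis KK T))
    = tens 'X_[v] (actH sK (H v) (tbasis KK T))
      + \sum_(w : 'X_{1..N < (mdeg v).+1} | tlt w v)
          tens 'X_[(w : 'X_{1..N})] (actH sK (H w) (tbasis KK T)).
Proof. exact: (main_gen qK sK T v (ltn_ord jj) (erefl (jj : nat))). Qed.
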